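(* Let $\delta\in(0,1)$ and let $f:G_\delta\to\mathbb{C}$ be a function. Suppose there are a Hilbert space $\mathcal{M}$, a unitary operator $U$ on $\mathcal{M}$ and a map $u:G_\delta\to\mathcal{M}$ such that for all $\lambda,\mu\in G_\delta$, $$1-\overline{f(\mu)}f(\lambda)=\langle(1-\mu_U^*\lambda_U)u(\lambda),u(\mu)\rangle_{\mathcal{M}}.$$ Then $f$ is holomorphic on $G_\delta$.
   Context: $G_\delta=\{x+iy: x,y\in\mathbb{R},\ \frac{x^2}{(1+\delta)^2}+\frac{y^2}{(1-\delta)^2}<1\}$. For $\lambda\in G_\delta$ and a unitary $U$ on $\mathcal{M}$, $\lambda_U=(\delta U^*-\tfrac12\lambda)(1-\tfrac12\lambda U^* )^{-1}$. *)

(* Defs.v *)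
From Stdlib Require Import Reals ClassicalEpsilon.
From Coquelicot Require Import Coquelicot.

Open Scope R_scope.

Definition G (delta : R) : C -> Prop :=
  fun z => (Re z)^2 / (1 + delta)^2 + (Im z)^2 / (1 - delta)^2 < 1.

Record Hilbert := {
  hcar :> CompleteNormedModule C_AbsRing;
  hinner : hcar -> hcar -> C;
  hinner_plus_l : forall x y z : hcar,
      hinner (plus x y) z = Cplus (hinner x z) (hinner y z);
  hinner_scal_l : forall (a : C) (x y : hcar),
      hinner (scal a x) y = Cmult a (hinner x y);
  hinner_conj : forall x y : hcar, hinner y x = Cconj (hinner x y);
  hinner_norm : forall x : hcar, norm x = sqrt (Re (hinner x x))
}.

Section Ops.
Variable M : Hilbert.

Definition unitary (U : M -> M) : Prop :=
  (forall x y : M, U (plus x y) = plus (U x) (U y)) /\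
  (forall (a : C) (x : M), U (scal a x) = scal a (U x)) /\
  (forall x y : M, hinner M (U x) (U y) = hinner M x y) /\
  (forall y : M, exists x : M, U x = y).

(* Hilbert-space adjoint Tstar : the operator with <T x, y> = <x, Tstar y>
   (chosen by description; it exists and is unique for bounded T). *)
Definition adj (T : M -> M) : M -> M :=
  fun y => epsilon (inhabits (zero : M))
             (fun z => forall x : M, hinner M (T x) y = hinner M x z).

(* Operator inverse A^{-1} (chosen by description; A bijective in our use). *)
Definition op_inv (A : M -> M) : M -> M :=
  fun x => epsilon (inhabits (zero : M)) (fun y => A y = x).

(* lambda_U = (delta Ustar - lambda/2) (1 - (lambda/2) Ustar)^{-1}, Ustar = adjoint of U *)
Definition lamU (delta : R) (U : M -> M) (lam : C) : M -> M :=
  fun x =>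
    let y := op_inv (fun v => minus v (scal (Cmult lam (RtoC (Rinv 2))) (adj U v))) x in
    minus (scal (RtoC delta) (adj U y)) (scal (Cmult lam (RtoC (Rinv 2))) y).

End Ops.

Definition holomorphic_on (D : C -> Prop) (f : C -> C) : Prop :=
  forall z, D z -> ex_derive (K := C_AbsRing) (V := C_NormedModule) f z.

(* Main.v *)
Require Import Defs.
From Stdlib Require Import Reals.
From Coquelicot Require Import Coquelicot.
From Stdlib Require Import Lra Psatz ClassicalEpsilon Classical_Prop.

Local Open Scope C_scope.


Lemma ip_conj {M : Hilbert} (x y : M) : hinner M y x = Cconj (hinner M x y).
Proof. apply hinner_conj. Qed.

Lemma ip_plus_l {M : Hilbert} (x y z : M) : hinner M (plus x y) z = hinner M x z + hinner M y z.
Proof. apply hinner_plus_l. Qed.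

Lemma ip_scal_l {M : Hilbert} (a : C) (x y : M) : hinner M (scal a x) y = a * hinner M x y.
Proof. apply hinner_scal_l. Qed.

Lemma opp_scal {M : Hilbert} (x : M) : opp x = scal (- RtoC 1) x.
Proof. symmetry. apply (@scal_opp_one C_AbsRing). Qed.

Lemma zero_scal {M : Hilbert} : (zero : M) = scal (RtoC 0) (zero : M).
Proof. symmetry. apply (@scal_zero_l C_AbsRing). Qed.

Lemma ip_opp_l {M : Hilbert} (x y : M) : hinner M (opp x) y = - hinner M x y.
Proof. rewrite opp_scal, ip_scal_l. ring. Qed.

Lemma minus_eq {M : Hilbert} (x y : M) : minus x y = plus x (opp y).
Proof. reflexivity. Qed.

Lemma ip_minus_l {M : Hilbert} (x y z : M) : hinner M (minus x y) z = hinner M x z - hinner M y z.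
Proof. rewrite minus_eq. rewrite ip_plus_l, ip_opp_l. ring. Qed.

Lemma ip_zero_l {M : Hilbert} (y : M) : hinner M zero y = 0.
Proof. rewrite zero_scal, ip_scal_l. ring. Qed.

Lemma ip_plus_r {M : Hilbert} (x y z : M) : hinner M z (plus x y) = hinner M z x + hinner M z y.
Proof. rewrite ip_conj, ip_plus_l, Cplus_conj, <- !ip_conj. auto. Qed.

Lemma ip_scal_r {M : Hilbert} (a : C) (x y : M) : hinner M y (scal a x) = Cconj a * hinner M y x.
Proof. rewrite ip_conj, ip_scal_l, Cmult_conj, <- !ip_conj. auto. Qed.

Lemma ip_opp_r {M : Hilbert} (x y : M) : hinner M y (opp x) = - hinner M y x.
Proof. rewrite ip_conj, ip_opp_l, Copp_conj, <- !ip_conj. auto. Qed.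

Lemma ip_minus_r {M : Hilbert} (x y z : M) : hinner M z (minus x y) = hinner M z x - hinner M z y.
Proof. rewrite ip_conj, ip_minus_l, Cminus_conj, <- !ip_conj. auto. Qed.

Lemma ip_zero_r {M : Hilbert} (y : M) : hinner M y zero = 0.
Proof. rewrite ip_conj, ip_zero_l. apply injective_projections; simpl; ring. Qed.

Lemma Cconj_R (r : R) : Cconj (RtoC r) = RtoC r.
Proof. apply injective_projections; simpl; ring. Qed.

Lemma hnorm_eq_zero {M : Hilbert} (x : M) : norm x = 0%R -> x = zero.
Proof. intros H. exact (@norm_eq_zero C_AbsRing M x H). Qed.

Lemma ip_self {M : Hilbert} (x : M) : hinner M x x = RtoC (norm x ^ 2).
Proof.
  assert (Him : Im (hinner M x x) = 0%R).
  { pose proof (ip_conj x x) as H. assert (H2 := f_equal Im H). rewrite im_conj in H2. lra. }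
  assert (Hre : (0 <= Re (hinner M x x))%R).
  { destruct (Rle_or_lt 0 (Re (hinner M x x))) as [h|h]; auto.
    assert (Hn : norm x = 0%R). { rewrite hinner_norm. apply sqrt_neg_0. lra. }
    apply hnorm_eq_zero in Hn. rewrite Hn, ip_zero_l in h. simpl in h. lra. }
  rewrite hinner_norm. rewrite pow2_sqrt by auto.
  destruct (hinner M x x) as [a b]. unfold Re, Im in *. simpl in *. subst. auto.
Qed.

Lemma ip_ext {M : Hilbert} (a b : M) : (forall y, hinner M a y = hinner M b y) -> a = b.
Proof.
  intros H. specialize (H (minus b a)).
  assert (E : hinner M (minus b a) (minus b a) = 0).
  { rewrite ip_minus_l, H. ring. }
  rewrite ip_self in E. assert (E2 := f_equal Re E). simpl in E2.
  assert (H0 : norm (minus b a) = 0%R) by nra.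
  apply (@ball_norm_eq C_AbsRing M). intros eps. unfold ball_norm.
  eapply Rle_lt_trans; [apply Req_le; exact H0 | apply cond_pos].
Qed.

Lemma ip_ext_r {M : Hilbert} (a b : M) : (forall y, hinner M y a = hinner M y b) -> a = b.
Proof.
  intros H. apply ip_ext. intros y. rewrite (ip_conj y a), (ip_conj y b), H. auto.
Qed.

Lemma htri {M : Hilbert} (a b : M) : (norm (plus a b) <= norm a + norm b)%R.
Proof. exact (@norm_triangle C_AbsRing M a b). Qed.

Lemma htri_minus {M : Hilbert} (a b : M) : (norm (minus a b) <= norm a + norm b)%R.
Proof. rewrite minus_eq. eapply Rle_trans. apply htri.
  rewrite opp_scal. pose proof (@norm_scal C_AbsRing M (- RtoC 1) b) as H.
  change (abs (- RtoC 1)) with (Cmod (- RtoC 1)) in H. rewrite Cmod_opp, Cmod_1 in H.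
  apply Rplus_le_compat_l. eapply Rle_trans; [exact H|lra]. Qed.

Lemma htri_inv {M : Hilbert} (a b : M) : (norm a - norm b <= norm (minus a b))%R.
Proof. pose proof (@norm_triangle_inv C_AbsRing M a b). eapply Rle_trans; [apply Rle_abs|exact H]. Qed.

Lemma hnorm_scal {M : Hilbert} (l : C) (x : M) : (norm (scal l x) <= Cmod l * norm x)%R.
Proof. exact (@norm_scal C_AbsRing M l x). Qed.

Lemma hnorm_ge_0 {M : Hilbert} (x : M) : (0 <= norm x)%R.
Proof. exact (@norm_ge_0 C_AbsRing M x). Qed.

Lemma Re_ip_plus {M : Hilbert} (a b : M) :
  (norm (plus a b) ^ 2 = norm a ^ 2 + norm b ^ 2 + 2 * Re (hinner M a b))%R.
Proof.
  assert (E : hinner M (plus a b) (plus a b) =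
     hinner M a a + hinner M b b + (hinner M a b + Cconj (hinner M a b))).
  { rewrite ip_plus_l, !ip_plus_r, (ip_conj a b). ring. }
  rewrite !ip_self in E. assert (E2 := f_equal Re E). destruct (hinner M a b) as [p q]. unfold Re in *. simpl in *. lra.
Qed.

Lemma CS_re {M : Hilbert} (a b : M) : (Re (hinner M a b) <= norm a * norm b)%R.
Proof.
  pose proof (Re_ip_plus a b). pose proof (htri a b).
  pose proof (hnorm_ge_0 a). pose proof (hnorm_ge_0 b). pose proof (hnorm_ge_0 (plus a b)).
  assert (norm (plus a b) * norm (plus a b) <= (norm a + norm b) * (norm a + norm b))%R
    by (apply Rmult_le_compat; lra).
  nra.
Qed.

Lemma norm_sq_ip {M : Hilbert} (x : M) : (norm x ^ 2 = Re (hinner M x x))%R.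
Proof. rewrite ip_self. simpl. auto. Qed.

Local Close Scope C_scope.

Local Open Scope C_scope.

From Stdlib Require ssreflect.
Module T.
Import ssreflect.
Ltac ipexp1 := rewrite ?ip_plus_l ?ip_minus_l ?ip_opp_l ?ip_scal_l ?ip_zero_l ?ip_plus_r ?ip_minus_r ?ip_opp_r ?ip_scal_r ?ip_zero_r.
Ltac ipexp1_in H := rewrite ?ip_plus_l ?ip_minus_l ?ip_opp_l ?ip_scal_l ?ip_zero_l ?ip_plus_r ?ip_minus_r ?ip_opp_r ?ip_scal_r ?ip_zero_r in H.
End T.
Ltac ipexp := do 4 T.ipexp1.
Ltac ipexp_in H := do 4 T.ipexp1_in H.

Lemma hnorm_opp {M : Hilbert} (x : M) : norm (opp x) = norm x.
Proof. exact (@norm_opp C_AbsRing M x). Qed.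

Lemma hnorm_minus_sym {M : Hilbert} (x y : M) : norm (minus x y) = norm (minus y x).
Proof. rewrite <- hnorm_opp. f_equal. apply ip_ext. intros z. ipexp. ring. Qed.

Lemma hzero_of_norm {M : Hilbert} (a b : M) :
  (forall eps : R, (0 < eps)%R -> (norm (minus a b) < eps)%R) -> a = b.
Proof.
  intros H. apply (@ball_norm_eq C_AbsRing M). intros eps. unfold ball_norm.
  assert (H1 : norm (minus b a) = norm (minus a b)) by apply hnorm_minus_sym.
  eapply Rle_lt_trans; [apply Req_le; exact H1 | apply H; apply cond_pos].
Qed.

Lemma isom_norm {M : Hilbert} (W : M -> M) (Wip : forall x y, hinner M (W x) (W y) = hinner M x y)
  (x : M) : norm (W x) = norm x.
Proof.
  pose proof (Wip x x) as H. rewrite !ip_self in H. assert (H2 := f_equal Re H). simpl in H2.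
  pose proof (hnorm_ge_0 x). pose proof (hnorm_ge_0 (W x)). nra.
Qed.

Fixpoint iterseq {M : Hilbert} (W : M -> M) (a : C) (x : M) (n : nat) : M :=
  match n with O => zero | S n => plus x (scal a (W (iterseq W a x n))) end.

Lemma surj_lemma {M : Hilbert} (W : M -> M)
  (Wplus : forall x y, W (plus x y) = plus (W x) (W y))
  (Wscal : forall (c : C) x, W (scal c x) = scal c (W x))
  (Wip : forall x y, hinner M (W x) (W y) = hinner M x y)
  (a : C) (Ha : (Cmod a < 1)%R) (x : M) :
  exists y, minus y (scal a (W y)) = x.
Proof.
  assert (Wopp : forall v, W (opp v) = opp (W v)).
  { intros v. rewrite opp_scal, Wscal, <- opp_scal. auto. }
  assert (Wminus : forall v w, W (minus v w) = minus (W v) (W w)).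
  { intros v w. rewrite !minus_eq, Wplus, Wopp. auto. }
  assert (Wzero : W zero = zero).
  { apply ip_ext. intros z. rewrite zero_scal, Wscal. ipexp. ring. }
  set (s := iterseq W a x).
  set (q := Cmod a).
  assert (Hq0 : (0 <= q)%R) by apply Cmod_ge_0.
  assert (sS : forall k, s (S k) = plus x (scal a (W (s k)))) by reflexivity.
  assert (s0 : s O = zero) by reflexivity.
  assert (Wn : forall v, norm (W v) = norm v) by (apply isom_norm; auto).
  assert (D : forall n, (norm (minus (s (S n)) (s n)) <= q ^ n * norm x)%R).
  { induction n.
    - assert (E : minus (s 1%nat) (s 0%nat) = x).
      { rewrite sS, s0. apply ip_ext. intros z. rewrite Wzero. ipexp. ring. }
      rewrite E. simpl. lra.
    - assert (E : minus (s (S (S n))) (s (S n)) = scal a (W (minus (s (S n)) (s n)))).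
      { rewrite (sS (S n)). rewrite (sS n) at 2. apply ip_ext. intros z. rewrite Wminus. ipexp. ring. }
      rewrite E. eapply Rle_trans. apply hnorm_scal. rewrite Wn. simpl. fold q.
      apply (Rmult_le_compat_l q) in IHn; auto. lra. }
  assert (Hq1 : (q < 1)%R) by auto.
  assert (D2 : forall n k, (norm (minus (s (n + k)%nat) (s n)) <= q ^ n * norm x / (1 - q))%R).
  { intros n k. assert (Hnx := hnorm_ge_0 x).
    assert (forall k, (norm (minus (s (n + k)%nat) (s n)) <= q ^ n * (1 - q ^ k) * norm x / (1 - q))%R).
    { induction k0.
      - rewrite Nat.add_0_r. assert (E : norm (minus (s n) (s n)) = 0%R).
        { assert (E' : minus (s n) (s n) = zero) by apply minus_eq_zero.
          rewrite E'. exact (@norm_zero C_AbsRing M). }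
        rewrite E. simpl. replace (1 - 1)%R with 0%R by ring. unfold Rdiv. rewrite Rmult_0_r, !Rmult_0_l. lra.
      - replace (minus (s (n + S k0)%nat) (s n)) with
          (plus (minus (s (S (n + k0))) (s (n + k0)%nat)) (minus (s (n + k0)%nat) (s n))).
        2:{ rewrite Nat.add_succ_r. apply ip_ext. intros z. ipexp. ring. }
        eapply Rle_trans. apply htri. pose proof (D (n + k0)%nat). rewrite pow_add in H.
        assert (q ^ n * q ^ k0 * norm x + q ^ n * (1 - q ^ k0) * norm x / (1 - q) =
                q ^ n * (1 - q ^ S k0) * norm x / (1 - q))%R.
        { simpl. field. lra. }
        lra. }
    eapply Rle_trans. apply H.
    assert (0 <= q ^ k)%R by (apply pow_le; auto).
    assert (0 <= q ^ n)%R by (apply pow_le; auto).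
    unfold Rdiv. apply Rmult_le_compat_r. apply Rlt_le, Rinv_0_lt_compat. lra.
    apply Rmult_le_compat_r. auto. nra. }
  assert (Hnx := hnorm_ge_0 x).
  assert (Cau : exists y, filterlim s eventually (locally y)).
  { apply (proj1 (filterlim_locally_cauchy (F := eventually) (U := M) s)).
    intros eps.
    assert (Hy0 : (0 < eps * (1 - q) / (norm x + 1))%R).
    { apply Rdiv_lt_0_compat. apply Rmult_lt_0_compat. apply cond_pos. lra. lra. }
    destruct (pow_lt_1_zero q) with (y := (eps * (1 - q) / (norm x + 1))%R) as [N HN].
    { rewrite Rabs_pos_eq; auto. }
    auto.
    exists (fun n => (N <= n)%nat). split. exists N; auto.
    assert (Key : forall u k, (N <= u)%nat -> (norm (minus (s (u + k)%nat) (s u)) < eps)%R).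
    { intros u k Hu. eapply Rle_lt_trans. apply D2.
      specialize (HN u Hu). rewrite Rabs_pos_eq in HN by (apply pow_le; auto).
      apply Rmult_lt_compat_r with (r := (norm x + 1)%R) in HN; [|lra].
      unfold Rdiv in *. rewrite Rmult_assoc, Rinv_l in HN by lra.
      assert (0 <= q ^ u)%R by (apply pow_le; auto).
      apply Rmult_lt_reg_r with (r := (1 - q)%R). lra.
      rewrite Rmult_assoc, Rinv_l by lra. nra. }
    intros u v Hu Hv. apply (@norm_compat1 C_AbsRing M).
    destruct (Nat.le_ge_cases u v) as [h|h].
    - replace v with (u + (v - u))%nat by lia. apply Key; auto.
    - assert (E := hnorm_minus_sym (s v) (s u)).
      replace u with (v + (u - v))%nat in E |- * by lia.
      eapply Rle_lt_trans; [apply Req_le; exact E|]. apply Key; auto. }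
  destruct Cau as [y Hy]. exists y.
  apply hzero_of_norm. intros eps Heps.
  pose proof (proj1 (filterlim_locally_ball_norm _ _) Hy (mkposreal (eps/2) ltac:(lra))) as [N HN].
  assert (H1 : (norm (minus (s N) y) < eps / 2)%R) by (apply HN; lia).
  assert (H2 : (norm (minus (s (S N)) y) < eps / 2)%R) by (apply HN; lia).
  assert (E : minus (minus y (scal a (W y))) x = plus (opp (minus (s (S N)) y)) (scal a (W (minus (s N) y)))).
  { rewrite (sS N). apply ip_ext. intros z. rewrite Wminus. ipexp. ring. }
  rewrite E. eapply Rle_lt_trans. apply htri. rewrite hnorm_opp.
  pose proof (hnorm_scal a (W (minus (s N) y))). rewrite Wn in H.
  pose proof (hnorm_ge_0 (minus (s N) y)). fold q in H.
  assert (q * norm (minus (s N) y) <= norm (minus (s N) y))%R by nra. lra.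
Qed.

Local Close Scope C_scope.

Local Open Scope C_scope.

Lemma adj_spec {M : Hilbert} (T : M -> M)
  (H : forall y, exists z, forall x, hinner M (T x) y = hinner M x z) :
  forall x y, hinner M (T x) y = hinner M x (adj M T y).
Proof.
  intros x y. revert x. unfold adj.
  apply (epsilon_spec (inhabits zero) (fun z => forall x, hinner M (T x) y = hinner M x z)).
  apply H.
Qed.

Lemma op_inv_spec {M : Hilbert} (A : M -> M) (H : forall x, exists y, A y = x) :
  forall x, A (op_inv M A x) = x.
Proof.
  intros x. unfold op_inv.
  apply (epsilon_spec (inhabits zero) (fun y => A y = x)). apply H.
Qed.


Lemma U_facts {M : Hilbert} (U : M -> M) (hU : unitary M U) :
  let V := adj M U in
  (forall x y, hinner M (U x) y = hinner M x (V y)) /\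
  (forall x y, hinner M (V x) y = hinner M x (U y)) /\
  (forall x y, V (plus x y) = plus (V x) (V y)) /\
  (forall (c : C) x, V (scal c x) = scal c (V x)) /\
  (forall x y, hinner M (V x) (V y) = hinner M x y).
Proof.
  intros V. destruct hU as (Uplus & Uscal & Uip & Usurj).
  assert (A : forall x y, hinner M (U x) y = hinner M x (V y)).
  { apply adj_spec. intros y. destruct (Usurj y) as [x0 Hx0]. exists x0.
    intros x. rewrite <- Hx0, Uip. auto. }
  assert (UV : forall y, U (V y) = y).
  { intros y. apply ip_ext_r. intros w. destruct (Usurj w) as [x0 <-].
    rewrite Uip, A. auto. }
  assert (B : forall x y, hinner M (V x) y = hinner M x (U y)).
  { intros x y. rewrite ip_conj, <- A, <- ip_conj. auto. }
  split; [auto|]. split; [auto|].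
  split; [|split].
  - intros x y. apply ip_ext_r. intros w. rewrite <- A, !ip_plus_r, <- !A. auto.
  - intros c x. apply ip_ext_r. intros w. rewrite <- A, !ip_scal_r, <- !A. auto.
  - intros x y. rewrite <- Uip, !UV. auto.
Qed.

Definition cof (lam : C) : C := Cmult lam (RtoC (Rinv 2)).

Definition zof {M : Hilbert} (U : M -> M) (lam : C) (x : M) : M :=
  op_inv M (fun v => minus v (scal (cof lam) (adj M U v))) x.

Lemma lamU_unpack {M : Hilbert} (U : M -> M) (hU : unitary M U) (delta : R) (lam : C)
  (Hc : (Cmod (cof lam) < 1)%R) (x : M) :
  minus (zof U lam x) (scal (cof lam) (adj M U (zof U lam x))) = x /\
  lamU M delta U lam x = minus (scal (RtoC delta) (adj M U (zof U lam x))) (scal (cof lam) (zof U lam x)).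
Proof.
  destruct (U_facts U hU) as (A & B & Vplus & Vscal & Vip).
  split; [|reflexivity].
  unfold zof. apply (op_inv_spec (fun v => minus v (scal (cof lam) (adj M U v)))).
  intros y. apply surj_lemma; auto.
Qed.

Lemma lamU_adj_ex {M : Hilbert} (U : M -> M) (hU : unitary M U) (delta : R) (lam : C)
  (Hc : (Cmod (cof lam) < 1)%R) :
  forall y, exists z, forall x, hinner M (lamU M delta U lam x) y = hinner M x z.
Proof.
  intros y.
  pose proof hU as hU'. destruct hU' as (Uplus & Uscal & Uip & Usurj).
  destruct (U_facts U hU) as (A & B & Vplus & Vscal & Vip).
  destruct (surj_lemma U Uplus Uscal Uip (Cconj (cof lam)) ltac:(rewrite Cmod_conj; auto)
     (minus (scal (RtoC delta) (U y)) (scal (Cconj (cof lam)) y))) as [r Hr].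
  exists r. intros x.
  destruct (lamU_unpack U hU delta lam Hc x) as [E1 E2].
  rewrite E2. set (s := zof U lam x) in *. rewrite <- E1.
  assert (Hs := f_equal (hinner M s) Hr). ipexp_in Hs.
  rewrite !Cconj_conj, Cconj_R in Hs.
  ipexp. rewrite !B. rewrite Hs. reflexivity.
Qed.

Local Close Scope C_scope.

Local Open Scope C_scope.

Lemma ip_adj_swap {M : Hilbert} (T : M -> M)
  (H : forall y, exists z, forall x, hinner M (T x) y = hinner M x z) (a c : M) :
  hinner M (adj M T a) c = hinner M a (T c).
Proof.
  rewrite ip_conj, <- adj_spec by auto. rewrite <- ip_conj. auto.
Qed.

Definition lc3 {M : Hilbert} (k1 k2 k3 : C) (x1 x2 x3 : M) : M :=
  plus (plus (scal k1 x1) (scal k2 x2)) (scal k3 x3).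

Lemma three {M : Hilbert} (f : C -> C) (u w : C -> M) (P : C -> Prop)
  (K : forall a b, P a -> P b -> hinner M (u a) (u b) = 1 - Cconj (f b) * f a + hinner M (w a) (w b))
  (p1 p2 p3 : C) (H1 : P p1) (H2 : P p2) (H3 : P p3) (k1 k2 : C) :
  ((Cmod (k1 * f p1 + k2 * f p2 + (- (k1 + k2)) * f p3)) ^ 2 +
   norm (lc3 k1 k2 (- (k1 + k2)) (u p1) (u p2) (u p3)) ^ 2 =
   norm (lc3 k1 k2 (- (k1 + k2)) (w p1) (w p2) (w p3)) ^ 2)%R.
Proof.
  set (F := k1 * f p1 + k2 * f p2 + (- (k1 + k2)) * f p3).
  assert (E : RtoC (Cmod F ^ 2) + hinner M (lc3 k1 k2 (- (k1 + k2)) (u p1) (u p2) (u p3))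
                                      (lc3 k1 k2 (- (k1 + k2)) (u p1) (u p2) (u p3))
     = hinner M (lc3 k1 k2 (- (k1 + k2)) (w p1) (w p2) (w p3)) (lc3 k1 k2 (- (k1 + k2)) (w p1) (w p2) (w p3))).
  { rewrite Cmod2_conj. unfold lc3, F. ipexp.
    rewrite (K p1 p1 H1 H1), (K p1 p2 H1 H2), (K p1 p3 H1 H3), (K p2 p1 H2 H1), (K p2 p2 H2 H2),
      (K p2 p3 H2 H3), (K p3 p1 H3 H1), (K p3 p2 H3 H2), (K p3 p3 H3 H3).
    rewrite !Cplus_conj, !Cmult_conj, !Copp_conj, !Cplus_conj. ring. }
  rewrite !ip_self in E. apply (f_equal Re) in E. unfold Re in E. simpl in E. lra.
Qed.

Lemma T0_bound {M : Hilbert} (V : M -> M) (Vip : forall x y, hinner M (V x) (V y) = hinner M x y)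
  (delta q : R) (c : C) (Z : M)
  (Hq : (2 * Cmod (RtoC q * c - RtoC delta * Cconj c) <= q * (1 + Cmod c ^ 2) - delta ^ 2 - Cmod c ^ 2)%R) :
  (norm (minus (scal (RtoC delta) (V Z)) (scal c Z)) ^ 2 <= q * norm (minus Z (scal c (V Z))) ^ 2)%R.
Proof.
  set (beta := RtoC q * c - RtoC delta * Cconj c).
  set (K := (q * (1 + Cmod c ^ 2) - delta ^ 2 - Cmod c ^ 2)%R).
  assert (E : RtoC q * hinner M (minus Z (scal c (V Z))) (minus Z (scal c (V Z)))
              - hinner M (minus (scal (RtoC delta) (V Z)) (scal c Z)) (minus (scal (RtoC delta) (V Z)) (scal c Z))
            = RtoC K * hinner M Z Z - (hinner M (scal beta (V Z)) Z + Cconj (hinner M (scal beta (V Z)) Z))).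
  { unfold K, beta. ipexp. rewrite Vip. rewrite (ip_conj (V Z) Z).
    rewrite ?Cminus_conj, ?Cmult_conj, ?Cconj_conj, ?Cconj_R, ?Copp_conj, ?Cplus_conj.
    rewrite ?Cmult_conj, ?Cconj_conj, ?Cconj_R.
    rewrite !RtoC_minus, !RtoC_mult, !RtoC_plus, !Cmod2_conj, !RtoC_pow.
    rewrite ?Cminus_conj, ?Cmult_conj, ?Cconj_conj, ?Cconj_R. ring. }
  rewrite !ip_self in E.
  pose proof (CS_re (scal beta (V Z)) Z) as CS.
  pose proof (hnorm_scal beta (V Z)) as NS. rewrite (isom_norm V Vip) in NS.
  destruct (hinner M (scal beta (V Z)) Z) as [h1 h2].
  apply (f_equal Re) in E. unfold Re in E, CS. simpl in E, CS.
  pose proof (hnorm_ge_0 Z). pose proof (Cmod_ge_0 beta).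
  assert (h1 <= Cmod beta * norm Z * norm Z)%R.
  { eapply Rle_trans. apply CS. apply Rmult_le_compat_r; auto. }
  fold beta in Hq. fold K in Hq.
  assert (2 * Cmod beta * (norm Z * norm Z) <= K * (norm Z * norm Z))%R.
  { apply Rmult_le_compat_r; auto. apply Rmult_le_pos; auto. }
  nra.
Qed.

Local Close Scope C_scope.

Lemma est (a e F r X Y b : R) (ha : 0 <= a) (he : 0 <= e) (hF : 0 <= F) (hr : 0 <= r) (hr1 : r < 1)
  (hb : b <= r * a) (HX : a - e <= X) (HX0 : 0 <= X) (HY : Y <= b + e) (HY0 : 0 <= Y)
  (E : F ^ 2 + X ^ 2 = Y ^ 2) : a <= 2 * e / (1 - r) /\ F <= r * a + e.
Proof.
  assert (XY : X <= Y) by nra.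
  assert (FY : F <= Y) by nra.
  split; [|lra].
  apply Rmult_le_reg_r with (r := (1 - r)). lra.
  unfold Rdiv. rewrite Rmult_assoc, Rinv_l by lra. lra.
Qed.

Lemma G_mod (delta : R) (hd : 0 < delta < 1) (z : C) : G delta z -> Cmod z < 1 + delta.
Proof.
  unfold G. intros H.
  set (x := Re z) in *. set (y := Im z) in *.
  assert (Hx : x ^ 2 / (1 + delta) ^ 2 = x ^ 2 * / (1 + delta) ^ 2) by reflexivity.
  assert (ia : 0 < / (1 + delta) ^ 2) by (apply Rinv_0_lt_compat; nra).
  assert (ib : / (1 + delta) ^ 2 <= / (1 - delta) ^ 2).
  { apply Rinv_le_contravar; nra. }
  assert (y ^ 2 * / (1 + delta) ^ 2 <= y ^ 2 * / (1 - delta) ^ 2).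
  { apply Rmult_le_compat_l; nra. }
  unfold Rdiv in H.
  assert (S : (x ^ 2 + y ^ 2) * / (1 + delta) ^ 2 < 1) by nra.
  assert (S2 : x ^ 2 + y ^ 2 < (1 + delta) ^ 2).
  { apply Rmult_lt_reg_r with (r := / (1 + delta) ^ 2); auto. rewrite Rinv_r by nra. lra. }
  assert (Cmod z ^ 2 < (1 + delta) ^ 2) by (rewrite Cmod2_alt; auto).
  pose proof (Cmod_ge_0 z). nra.
Qed.

Lemma G_cof (delta : R) (hd : 0 < delta < 1) (z : C) : G delta z -> Cmod (cof z) < 1.
Proof.
  intros H. apply G_mod in H; auto. unfold cof. rewrite Cmod_mult, Cmod_R.
  rewrite Rabs_pos_eq by lra. lra.
Qed.

Lemma sq_bound (x x0 rho : R) : Rabs (x - x0) < rho -> rho <= 1 -> x ^ 2 <= x0 ^ 2 + rho * (2 * Rabs x0 + 1).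
Proof.
  intros H1 H2. set (d := x - x0) in *. replace x with (x0 + d) by (unfold d; ring).
  assert (Rabs d * Rabs d <= Rabs d * 1).
  { apply Rmult_le_compat_l. apply Rabs_pos. lra. }
  rewrite <- Rabs_mult in H. 
  assert (d * d <= Rabs d). { eapply Rle_trans. apply Rle_abs. lra. }
  assert (x0 * d <= Rabs x0 * Rabs d) by (rewrite <- Rabs_mult; apply Rle_abs).
  assert (Rabs x0 * Rabs d <= Rabs x0 * rho) by (apply Rmult_le_compat_l; [apply Rabs_pos|lra]).
  nra.
Qed.

Lemma G_open (delta : R) (hd : 0 < delta < 1) (z0 : C) : G delta z0 ->
  exists rho, 0 < rho /\ forall z, Cmod (z - z0)%C < rho -> G delta z.
Proof.
  unfold G. intros H.
  set (ia := / (1 + delta) ^ 2). set (ib := / (1 - delta) ^ 2).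
  assert (Hia : 0 < ia) by (apply Rinv_0_lt_compat; nra).
  assert (Hib : 0 < ib) by (apply Rinv_0_lt_compat; nra).
  unfold Rdiv in H. fold ia ib in H.
  set (s := Re z0 ^ 2 * ia + Im z0 ^ 2 * ib) in *.
  set (K := (2 * Rabs (Re z0) + 1) * ia + (2 * Rabs (Im z0) + 1) * ib).
  assert (HK : 0 < K).
  { unfold K. pose proof (Rabs_pos (Re z0)). pose proof (Rabs_pos (Im z0)). nra. }
  exists (Rmin 1 ((1 - s) / (2 * K))). split.
  { apply Rmin_pos. lra. apply Rdiv_lt_0_compat; lra. }
  intros z Hz. unfold Rdiv. fold ia ib.
  set (rho := Rmin 1 ((1 - s) / (2 * K))) in *.
  assert (r1 : rho <= 1) by apply Rmin_l.
  assert (r2 : rho <= (1 - s) / (2 * K)) by apply Rmin_r.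
  pose proof (Rmax_Cmod (z - z0)%C) as HM.
  assert (Hx : Rabs (Re z - Re z0) < rho).
  { eapply Rle_lt_trans; [|exact Hz]. eapply Rle_trans; [|exact HM]. apply Rmax_l. }
  assert (Hy : Rabs (Im z - Im z0) < rho).
  { eapply Rle_lt_trans; [|exact Hz]. eapply Rle_trans; [|exact HM]. apply Rmax_r. }
  apply sq_bound in Hx; auto. apply sq_bound in Hy; auto.
  assert (Re z ^ 2 * ia <= (Re z0 ^ 2 + rho * (2 * Rabs (Re z0) + 1)) * ia) by (apply Rmult_le_compat_r; lra).
  assert (Im z ^ 2 * ib <= (Im z0 ^ 2 + rho * (2 * Rabs (Im z0) + 1)) * ib) by (apply Rmult_le_compat_r; lra).
  assert (rho * K <= (1 - s) / 2).
  { replace ((1 - s) / 2) with ((1 - s) / (2 * K) * K) by (field; lra).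
    apply Rmult_le_compat_r; lra. }
  unfold K in H2. unfold s in *. nra.
Qed.

Lemma G_q (delta : R) (hd : 0 < delta < 1) (z0 : C) : G delta z0 ->
  exists q, 0 <= q < 1 /\
   2 * Cmod (RtoC q * cof z0 - RtoC delta * Cconj (cof z0))%C <=
     q * (1 + Cmod (cof z0) ^ 2) - delta ^ 2 - Cmod (cof z0) ^ 2.
Proof.
  intros HG. pose proof (G_cof delta hd z0 HG) as Hc.
  set (c := cof z0) in *.
  set (m := 2 * Cmod (c - RtoC delta * Cconj c)%C).
  assert (Hm : m < 1 - delta ^ 2).
  { assert (E : Cmod (c - RtoC delta * Cconj c)%C ^ 2 =
       ((1 - delta) * Re z0 / 2) ^ 2 + ((1 + delta) * Im z0 / 2) ^ 2).
    { rewrite Cmod2_alt. unfold c, cof. destruct z0 as [x y]. unfold Re, Im. simpl. field. }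
    unfold G in HG.
    assert (HG2 : (1 - delta) ^ 2 * Re z0 ^ 2 + (1 + delta) ^ 2 * Im z0 ^ 2 < (1 - delta ^ 2) ^ 2).
    { assert (0 < 1 - delta ^ 2) by nra. assert (0 < (1 - delta ^ 2) ^ 2) by (apply pow_lt; lra).
      replace ((1 - delta ^ 2) ^ 2) with (((1 - delta) ^ 2 * (1 + delta) ^ 2)) in * by ring.
      apply Rmult_lt_compat_l with (r := ((1 - delta) ^ 2 * (1 + delta) ^ 2)) in HG; [|nra].
      replace ((1 - delta) ^ 2 * (1 + delta) ^ 2 * (Re z0 ^ 2 / (1 + delta) ^ 2 + Im z0 ^ 2 / (1 - delta) ^ 2))
        with ((1 - delta) ^ 2 * Re z0 ^ 2 + (1 + delta) ^ 2 * Im z0 ^ 2) in HG by (field; lra).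
      lra. }
    assert (Em : m ^ 2 = 4 * Cmod (c - RtoC delta * Cconj c)%C ^ 2) by (unfold m; ring).
    rewrite E in Em.
    assert (m ^ 2 < (1 - delta ^ 2) ^ 2) by (rewrite Em; lra).
    assert (0 <= m) by (unfold m; pose proof (Cmod_ge_0 (c - RtoC delta * Cconj c)%C); lra).
    assert (0 < 1 - delta ^ 2) by nra. destruct (Rlt_or_le m (1 - delta ^ 2)); auto. assert ((1 - delta ^ 2) * (1 - delta ^ 2) <= m * m) by (apply Rmult_le_compat; lra). nra. }
  set (g := 1 - delta ^ 2 - m).
  exists (1 - g / 4).
  assert (0 <= m) by (unfold m; pose proof (Cmod_ge_0 (c - RtoC delta * Cconj c)%C); lra).
  split. { unfold g. nra. }
  assert (T : Cmod (RtoC (1 - g / 4) * c - RtoC delta * Cconj c)%C <=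
              Cmod (c - RtoC delta * Cconj c)%C + (g / 4) * Cmod c).
  { replace (RtoC (1 - g / 4) * c - RtoC delta * Cconj c)%C with
       ((c - RtoC delta * Cconj c) + (- RtoC (g / 4)) * c)%C.
    2:{ rewrite RtoC_minus. ring. }
    eapply Rle_trans. apply Cmod_triangle. rewrite Cmod_mult, Cmod_opp, Cmod_R.
    rewrite Rabs_pos_eq. lra. unfold g. lra. }
  pose proof (Cmod_ge_0 c).
  assert ((1 + Cmod c) ^ 2 <= 4) by nra.
  assert (g / 4 * (1 + Cmod c) ^ 2 <= g) by (unfold g in *; nra).
  unfold m in g. unfold g in *. nra.
Qed.

Lemma sq_le (a b q : R) : (0 <= a -> 0 <= b -> 0 <= q -> b ^ 2 <= q * a ^ 2 -> b <= sqrt q * a)%R.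
Proof.
  intros Ha Hb Hq H. rewrite <- (sqrt_pow2 b Hb), <- (sqrt_pow2 a Ha), <- sqrt_mult by (try lra; apply pow2_ge_0).
  apply sqrt_le_1_alt. auto.
Qed.

Definition Fcomb (f : C -> C) (p1 p2 p3 k1 k2 : C) : C := (k1 * f p1 + k2 * f p2 + (- (k1 + k2)) * f p3)%C.
Definition ecomb {M : Hilbert} (z : C -> M) (p1 p2 c0 k1 k2 : C) : M :=
  plus (scal (k1 * (cof p1 - c0))%C (z p1)) (scal (k2 * (cof p2 - c0))%C (z p2)).

Lemma Cminus_eq0 (a b : C) : (a - b)%C = 0%C -> a = b.
Proof. intros H. replace a with ((a - b) + b)%C by ring. rewrite H. ring. Qed.

Lemma locally'_proper_C (x : C) : ProperFilter (@locally' C_UniformSpace x).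
Proof.
  constructor.
  - intros P [eps HP]. exists (x + RtoC (eps / 2))%C. apply HP.
    + apply C_NormedModule_mixin_compat1. change (Cmod (x + RtoC (eps / 2) - x)%C < eps).
      replace (x + RtoC (eps / 2) - x)%C with (RtoC (eps / 2)) by ring.
      rewrite Cmod_R, Rabs_pos_eq; destruct eps; simpl; lra.
    + intros H. assert (E : RtoC (eps / 2) = 0%C).
      { replace (RtoC (eps / 2)) with ((x + RtoC (eps / 2)) - x)%C by ring. rewrite H. ring. }
      injection E. destruct eps; simpl; lra.
  - apply within_filter, locally_filter.
Qed.

Theorem proposition2p9 (delta : R) (hdelta : 0 < delta < 1) (f : C -> C)
  (M : Hilbert) (U : M -> M) (hU : unitary M U) (u : C -> M)
  (hf : forall lam mu : C, G delta lam -> G delta mu ->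
     Cminus (RtoC 1) (Cmult (Cconj (f mu)) (f lam)) =
     hinner M (minus (u lam) (adj M (lamU M delta U mu) (lamU M delta U lam (u lam))))
              (u mu)) :
  holomorphic_on (G delta) f.
Proof.
  intros z0 Hz0.
  pose proof hU as hU'. destruct hU' as (Uplus & Uscal & Uip & Usurj).
  destruct (U_facts U hU) as (A & B & Vplus & Vscal & Vip).
  set (z := fun l => zof U l (u l)).
  set (w := fun l => lamU M delta U l (u l)).
  assert (Eu : forall l, G delta l -> u l = minus (z l) (scal (cof l) (adj M U (z l)))).
  { intros l Hl. symmetry. apply (lamU_unpack U hU delta l (G_cof delta hdelta l Hl)). }
  assert (Ew : forall l, G delta l -> w l = minus (scal (RtoC delta) (adj M U (z l))) (scal (cof l) (z l))).
  { intros l Hl. apply (lamU_unpack U hU delta l (G_cof delta hdelta l Hl)). }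
  assert (Ker : forall a b, G delta a -> G delta b ->
     hinner M (u a) (u b) = (1 - Cconj (f b) * f a + hinner M (w a) (w b))%C).
  { intros a b Ha Hb. pose proof (hf a b Ha Hb) as H.
    rewrite ip_minus_l, (ip_adj_swap _ (lamU_adj_ex U hU delta b (G_cof delta hdelta b Hb))) in H.
    fold (w a) (w b) in H.
    replace (hinner M (u a) (u b)) with ((hinner M (u a) (u b) - hinner M (w a) (w b)) + hinner M (w a) (w b))%C by ring.
    rewrite <- H. unfold Cminus. ring. }
  destruct (G_q delta hdelta z0 Hz0) as [q [Hq Hqb]].
  set (c0 := cof z0) in *.
  assert (Hc0 : (Cmod c0 < 1)%R) by (apply (G_cof delta); auto).
  set (r := sqrt q).
  assert (Hr : (0 <= r < 1)%R).
  { unfold r. split. apply sqrt_pos. rewrite <- sqrt_1. apply sqrt_lt_1; lra. }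
  assert (Bnd : forall Z, (norm (minus (scal (RtoC delta) (adj M U Z)) (scal c0 Z)) <= r * norm (minus Z (scal c0 (adj M U Z))))%R).
  { intros Z. pose proof (T0_bound (adj M U) Vip delta q c0 Z Hqb) as H.
    apply sq_le; auto using hnorm_ge_0. lra. }
  assert (Master : forall p1 p2, G delta p1 -> G delta p2 -> forall k1 k2 : C,
    ((1 - Cmod c0) * norm (lc3 k1 k2 (- (k1 + k2))%C (z p1) (z p2) (z z0)) <= 2 * norm (ecomb z p1 p2 c0 k1 k2) / (1 - r)) /\
    (Cmod (Fcomb f p1 p2 z0 k1 k2) <= r * (2 * norm (ecomb z p1 p2 c0 k1 k2) / (1 - r)) + norm (ecomb z p1 p2 c0 k1 k2))).
  { intros p1 p2 H1 H2 k1 k2.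
    pose proof (three f u w (G delta) Ker p1 p2 z0 H1 H2 Hz0 k1 k2) as H3.
    set (Z := lc3 k1 k2 (- (k1 + k2))%C (z p1) (z p2) (z z0)) in *.
    set (e := ecomb z p1 p2 c0 k1 k2) in *. unfold Fcomb.
    assert (EU : lc3 k1 k2 (- (k1 + k2)) (u p1) (u p2) (u z0) = minus (minus Z (scal c0 (adj M U Z))) (adj M U e)).
    { rewrite (Eu p1 H1), (Eu p2 H2), (Eu z0 Hz0). apply ip_ext. intros y. unfold Z, e, ecomb, lc3.
      ipexp. rewrite !B. ipexp. unfold c0. ring. }
    assert (EW : lc3 k1 k2 (- (k1 + k2)) (w p1) (w p2) (w z0) = minus (minus (scal (RtoC delta) (adj M U Z)) (scal c0 Z)) e).
    { rewrite (Ew p1 H1), (Ew p2 H2), (Ew z0 Hz0). apply ip_ext. intros y. unfold Z, e, ecomb, lc3.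
      ipexp. rewrite !B. ipexp. unfold c0. ring. }
    rewrite EU, EW in H3.
    pose proof (Bnd Z) as HB.
    pose proof (htri_inv (minus Z (scal c0 (adj M U Z))) (adj M U e)) as HX.
    rewrite (isom_norm _ Vip) in HX.
    pose proof (htri_minus (minus (scal (RtoC delta) (adj M U Z)) (scal c0 Z)) e) as HY.
    destruct (est (norm (minus Z (scal c0 (adj M U Z)))) (norm e) (Cmod (k1 * f p1 + k2 * f p2 + - (k1 + k2) * f z0)%C)
       r _ _ _ (hnorm_ge_0 _) (hnorm_ge_0 _) (Cmod_ge_0 _) (proj1 Hr) (proj2 Hr) HB HX (hnorm_ge_0 _) HY (hnorm_ge_0 _) H3)
      as [E1 E2].
    split. 2:{ assert (r * norm (minus Z (scal c0 (adj M U Z))) <= r * (2 * norm e / (1 - r)))%R by (apply Rmult_le_compat_l; lra). lra. }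
    eapply Rle_trans; [|exact E1].
    pose proof (htri_inv Z (scal c0 (adj M U Z))) as HZ.
    pose proof (hnorm_scal c0 (adj M U Z)) as HS. rewrite (isom_norm _ Vip) in HS.
    lra. }
  assert (Hcofd : forall l, Cmod (cof l - c0)%C = (Cmod (l - z0)%C / 2)%R).
  { intros l. unfold c0, cof. replace (l * RtoC (/ 2) - z0 * RtoC (/ 2))%C with ((l - z0) * RtoC (/ 2))%C by ring.
    rewrite Cmod_mult, Cmod_R, Rabs_pos_eq by lra. lra. }
  set (Ka := (2 / ((1 - r) * (1 - Cmod c0)))%R).
  assert (HKa : (0 < Ka)%R). { unfold Ka. apply Rdiv_lt_0_compat. lra. apply Rmult_lt_0_compat; lra. }
  destruct (G_open delta hdelta z0 Hz0) as [rhoG [HrhoG HGo]].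
  set (rho1 := Rmin rhoG (/ (Ka + 1))).
  assert (Hrho1 : (0 < rho1)%R). { apply Rmin_pos; auto. apply Rinv_0_lt_compat. lra. }
  assert (Lip : forall l, (Cmod (l - z0)%C < rho1)%R -> G delta l /\
                 (norm (minus (z l) (z z0)) <= Ka * norm (z z0) * Cmod (l - z0)%C)%R).
  { intros l Hl.
    assert (Gl : G delta l) by (apply HGo; eapply Rlt_le_trans; [exact Hl|apply Rmin_l]).
    split; auto.
    destruct (Master l z0 Gl Hz0 1 (-1)) as [M1 _].
    assert (EZ : lc3 1 (-1) (- (1 + -1))%C (z l) (z z0) (z z0) = minus (z l) (z z0)).
    { apply ip_ext. intros y. unfold lc3. ipexp. ring. }
    assert (Ee : ecomb z l z0 c0 1 (-1) = scal (cof l - c0)%C (z l)).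
    { apply ip_ext. intros y. unfold ecomb. ipexp. unfold c0. ring. }
    rewrite EZ, Ee in M1.
    pose proof (hnorm_scal (cof l - c0)%C (z l)) as HS. rewrite Hcofd in HS.
    assert (Ez : z l = plus (minus (z l) (z z0)) (z z0)).
    { apply ip_ext. intros y. ipexp. ring. }
    assert (HT : (norm (z l) <= norm (minus (z l) (z z0)) + norm (z z0))%R) by (rewrite Ez at 1; apply htri).
    set (d := norm (minus (z l) (z z0))) in *.
    set (n0 := norm (z z0)) in *.
    set (h := Cmod (l - z0)%C) in *.
    assert (Hh : (Ka * h <= 1)%R).
    { assert (h < / (Ka + 1))%R by (eapply Rlt_le_trans; [exact Hl|apply Rmin_r]).
      apply Rmult_lt_compat_l with (r := (Ka + 1)%R) in H; [|lra].
      rewrite Rinv_r in H by lra. pose proof (Cmod_ge_0 (l - z0)%C). fold h in H0. nra. }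
    assert (Hd0 : (0 <= d)%R) by apply hnorm_ge_0.
    assert (Hn0 : (0 <= n0)%R) by apply hnorm_ge_0.
    assert (Hh0 : (0 <= h)%R) by apply Cmod_ge_0.
    assert (Hd1 : (d <= Ka * (h / 2 * (d + n0)))%R).
    { unfold Ka. apply Rmult_le_reg_l with (r := (1 - Cmod c0)%R). lra.
      eapply Rle_trans. exact M1.
      assert (norm (scal (cof l - c0)%C (z l)) <= h / 2 * (d + n0))%R.
      { eapply Rle_trans. exact HS. apply Rmult_le_compat_l. lra. exact HT. }
      unfold Rdiv.
      replace ((1 - Cmod c0) * (2 * / ((1 - r) * (1 - Cmod c0)) * (h * / 2 * (d + n0))))%R
        with (2 * (h * / 2 * (d + n0)) * / (1 - r))%R by (field; lra).
      apply Rmult_le_compat_r. apply Rlt_le, Rinv_0_lt_compat. lra. lra. }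
    nra. }
  set (D := fun l => ((f l - f z0) / (l - z0))%C).
  set (Kf := (r * (2 / (1 - r)) + 1)%R).
  set (n0 := norm (z z0)).
  assert (HKf : (0 <= Kf)%R). { unfold Kf. assert (0 <= 2 / (1 - r))%R by (apply Rlt_le, Rdiv_lt_0_compat; lra). nra. }
  assert (Hn0 : (0 <= n0)%R) by apply hnorm_ge_0.
  assert (Cau2 : forall l l', (0 < Cmod (l - z0)%C < rho1)%R -> (0 < Cmod (l' - z0)%C < rho1)%R ->
     (Cmod (D l - D l')%C <= Kf * (Ka * n0 / 2) * (Cmod (l - z0)%C + Cmod (l' - z0)%C))%R).
  { intros l l' Hl Hl'.
    destruct (Lip l (proj2 Hl)) as [Gl d1]. destruct (Lip l' (proj2 Hl')) as [Gl' d2].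
    assert (hn : (l - z0)%C <> 0%C) by (apply Cmod_gt_0; lra).
    assert (hn' : (l' - z0)%C <> 0%C) by (apply Cmod_gt_0; lra).
    set (k1 := (/ (l - z0))%C). set (k2 := (- / (l' - z0))%C).
    destruct (Master l l' Gl Gl' k1 k2) as [_ M2].
    assert (EF : Fcomb f l l' z0 k1 k2 = (D l - D l')%C).
    { unfold Fcomb, D, k1, k2. field; repeat split; auto. }
    assert (s1 : (k1 * (cof l - c0))%C = RtoC (/ 2)).
    { unfold k1, c0, cof. field; repeat split; auto; intro H0; injection H0; lra. }
    assert (s2 : (k2 * (cof l' - c0))%C = (- RtoC (/ 2))%C).
    { unfold k2, c0, cof. field; repeat split; auto; intro H0; injection H0; lra. }
    assert (Ee : ecomb z l l' c0 k1 k2 =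
       minus (scal (RtoC (/ 2)) (minus (z l) (z z0))) (scal (RtoC (/ 2)) (minus (z l') (z z0)))).
    { unfold ecomb. rewrite s1, s2. apply ip_ext. intros y. ipexp. ring. }
    rewrite EF in M2.
    assert (T1 : (norm (ecomb z l l' c0 k1 k2) <= norm (scal (RtoC (/ 2)) (minus (z l) (z z0))) + norm (scal (RtoC (/ 2)) (minus (z l') (z z0))))%R)
      by (rewrite Ee; apply htri_minus).
    pose proof (hnorm_scal (RtoC (/ 2)) (minus (z l) (z z0))) as T2.
    pose proof (hnorm_scal (RtoC (/ 2)) (minus (z l') (z z0))) as T3.
    rewrite Cmod_R, Rabs_pos_eq in T2, T3 by lra.
    set (e := ecomb z l l' c0 k1 k2) in *.
    assert (He : (norm e <= Ka * n0 / 2 * (Cmod (l - z0)%C + Cmod (l' - z0)%C))%R).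
    { fold n0 in d1, d2. eapply Rle_trans. exact T1. nra. }
    assert (M3 : (Cmod (D l - D l')%C <= Kf * norm e)%R).
    { eapply Rle_trans. exact M2. unfold Kf. unfold Rdiv. lra. }
    eapply Rle_trans. exact M3. rewrite Rmult_assoc. apply Rmult_le_compat_l; auto. }
  set (Kc := (Kf * (Ka * n0 / 2))%R).
  assert (HKc : (0 <= Kc)%R) by (unfold Kc; apply Rmult_le_pos; auto; apply Rmult_le_pos; try lra; apply Rmult_le_pos; lra).
  destruct (proj1 (@filterlim_locally_cauchy C_UniformSpace C_CompleteNormedModule _ (locally'_proper_C z0) D)) as [L HL].
  { intros eps.
    set (dd := Rmin rho1 (eps / (2 * Kc + 1))).
    assert (Hdd : (0 < dd)%R). { apply Rmin_pos; auto. apply Rdiv_lt_0_compat. destruct eps; simpl; lra. lra. }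
    exists (fun l => (0 < Cmod (l - z0)%C < dd)%R). split.
    - unfold locally', within. apply filter_imp with (P := ball_norm z0 dd).
      + intros y Hy Hne. split.
        * apply Cmod_gt_0. intro H0. apply Hne. apply Cminus_eq0. exact H0.
        * exact Hy.
      + apply (locally_ball_norm z0 (mkposreal dd Hdd)).
    - intros a b Ha Hb. apply C_NormedModule_mixin_compat1. change (Cmod (D b - D a)%C < eps).
      assert (dd <= rho1)%R by apply Rmin_l.
      assert (dd <= eps / (2 * Kc + 1))%R by apply Rmin_r.
      eapply Rle_lt_trans. apply Cau2; lra.
      assert (Kc * (Cmod (b - z0)%C + Cmod (a - z0)%C) <= Kc * (2 * dd))%R by (apply Rmult_le_compat_l; lra).
      assert (Kc * (2 * dd) <= 2 * Kc * (eps / (2 * Kc + 1)))%R by nra.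
      assert (2 * Kc * (eps / (2 * Kc + 1)) < eps)%R.
      { replace (2 * Kc * (eps / (2 * Kc + 1)))%R with (eps * (2 * Kc / (2 * Kc + 1)))%R by (field; lra).
        assert (2 * Kc / (2 * Kc + 1) < 1)%R.
        { apply Rmult_lt_reg_r with (r := (2 * Kc + 1)%R). lra. unfold Rdiv.
          rewrite Rmult_assoc, Rinv_l by lra. lra. }
        destruct eps as [e0 He0]; simpl in *. nra. }
      fold Kc. lra. }
  exists L. unfold is_derive, filterdiff. split.
  { apply is_linear_scal_l. }
  intros x Hx. pose proof (@is_filter_lim_locally_unique C_AbsRing (AbsRing_NormedModule C_AbsRing) z0 x Hx) as Hx2. subst x.
  intros eps.
  pose proof (proj1 (filterlim_locally_ball_norm _ _) HL eps) as H.
  unfold locally', within in H. destruct H as [d Hd]. exists d. intros y Hy0.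
  assert (Hy : y <> z0 -> ball_norm L eps (D y)).
  { apply Hd. apply C_NormedModule_mixin_compat1. exact Hy0. }
  change (Cmod ((f y - f z0) - (y - z0) * L)%C <= eps * Cmod (y - z0)%C)%R.
  destruct (Classical_Prop.classic (y = z0)) as [E|E].
  - subst y. replace ((f z0 - f z0) - (z0 - z0) * L)%C with (RtoC 0) by ring.
    replace (z0 - z0)%C with (RtoC 0) by ring. rewrite Cmod_0. lra.
  - specialize (Hy E). change (Cmod (D y - L)%C < eps)%R in Hy.
    assert (hn : (y - z0)%C <> 0%C).
    { intro H0. apply E. apply Cminus_eq0. exact H0. }
    replace ((f y - f z0) - (y - z0) * L)%C with ((y - z0) * (D y - L))%C by (unfold D; field; auto).
    rewrite Cmod_mult. rewrite Rmult_comm. apply Rmult_le_compat_r. apply Cmod_ge_0. lra.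
Qed.
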